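(* Let $k,l,m$ be pairwise distinct complex parameters and $J,\widetilde J,\widehat J$ pairwise commuting invertible constant $N\times N$ matrices, with variables $\xi^J_k,\xi^{\widetilde J}_l,\xi^{\widehat J}_m$ and $N\times N$ matrix fields $H_{kl},H_{lk},H_{lm},H_{ml},H_{km},H_{mk}$. Define \begin{align*} \mathcal L_{klm}=&\tfrac12\operatorname{tr}\Big\{H_{ml}\widetilde J(\partial^J_kH_{lm})\widehat J-(\partial^J_kH_{ml})\widetilde JH_{lm}\widehat J+H_{km}\widehat J(\partial^{\widetilde J}_lH_{mk})J-(\partial^{\widetilde J}_lH_{km})\widehat JH_{mk}J\\ &\qquad+H_{lk}J(\partial^{\widehat J}_mH_{kl})\widetilde J-(\partial^{\widehat J}_mH_{lk})JH_{kl}\widetilde J\Big\}\\ &+\operatorname{tr}\Big\{H_{ml}\widetilde JH_{lm}\frac{J\widehat J}{k-m}-H_{ml}\frac{\widetilde JJ}{k-l}H_{lm}\widehat J+H_{km}\widehat JH_{mk}\frac{\widetilde JJ}{l-k}-H_{km}\frac{\widehat J\widetilde J}{l-m}H_{mk}J\\ &\qquad+H_{lk}JH_{kl}\frac{\widehat J\widetilde J}{m-l}-H_{lk}\frac{\widehat JJ}{m-k}H_{kl}\widetilde J\Big\} +\operatorname{tr}\Big\{H_{lm}\widehat JH_{mk}JH_{kl}\widetilde J-H_{ml}\widetilde JH_{lk}JH_{km}\widehat J\Big\}. \end{align*} Then the Euler–Lagrange equations of $\mathcal L_{klm}$ with respect to the six fields are equivalent to the six equations $$\partial^J_kH_{lm}=\tfrac{J}{k-l}H_{lm}-H_{lm}\tfrac{J}{k-m}+H_{lk}JH_{km},\qquad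 \partial^J_kH_{ml}=\tfrac{J}{k-m}H_{ml}-H_{ml}\tfrac{J}{k-l}+H_{mk}JH_{kl},$$ $$\partial^{\widetilde J}_lH_{mk}=\tfrac{\widetilde J}{l-m}H_{mk}-H_{mk}\tfrac{\widetilde J}{l-k}+H_{ml}\widetilde JH_{lk},\qquad \partial^{\widetilde J}_lH_{km}=\tfrac{\widetilde J}{l-k}H_{km}-H_{km}\tfrac{\widetilde J}{l-m}+H_{kl}\widetilde JH_{lm},$$ $$\partial^{\widehat J}_mH_{kl}=\tfrac{\widehat J}{m-k}H_{kl}-H_{kl}\tfrac{\widehat J}{m-l}+H_{km}\widehat JH_{ml},\qquad \partial^{\widehat J}_mH_{lk}=\tfrac{\widehat J}{m-l}H_{lk}-H_{lk}\tfrac{\widehat J}{m-k}+H_{lm}\widehat JH_{mk}.$$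
   Context: $\partial^J_k=\partial/\partial\xi^J_k$ etc.; $\operatorname{tr}$ is the matrix trace; the Euler–Lagrange equations are the standard ones for a Lagrangian density in the three independent variables $\xi^J_k,\xi^{\widetilde J}_l,\xi^{\widehat J}_m$, obtained by varying each matrix entry of each field independently. *)

(* Defs.v *)
From HB Require Import structures.
From mathcomp Require Import all_boot all_order all_algebra complex.
From mathcomp Require Import all_classical all_reals all_analysis.
Import numFieldNormedType.Exports.
Set Implicit Arguments. Unset Strict Implicit. Unset Printing Implicit Defensive.
Import Order.TTheory GRing.Theory Num.Theory.
Local Open Scope ring_scope.

Section EulerLagrange.
Variables (K : numFieldType) (N : nat).

(** Points of the space of independent variables (xi^J_k, xi^~J_l, xi^^J_m),
    indexed by 'I_3 : 0 <-> xi^J_k, 1 <-> xi^~J_l, 2 <-> xi^^J_m. *)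
Definition pt := 'I_3 -> K.

Definition shift (p : pt) (x : 'I_3) (t : K) : pt :=
  fun y => if y == x then p y + t else p y.

Definition pderiv (f : pt -> K) (x : 'I_3) (p : pt) : K :=
  derive1 (fun t => f (shift p x t)) 0.

Definition mpderiv (F : pt -> 'M[K]_N) (x : 'I_3) (p : pt) : 'M[K]_N :=
  \matrix_(i, j) pderiv (fun q => F q i j) x p.

Definition fields := 'I_6 -> pt -> 'M[K]_N.

(** First-order Lagrangian density: a function of the values of the six
    fields and of all their first partial derivatives (d x f = d_x H_f). *)
Definition lagrangian :=
  ('I_6 -> 'M[K]_N) -> ('I_3 -> 'I_6 -> 'M[K]_N) -> K.

Definition updf (U : 'I_6 -> 'M[K]_N) (f : 'I_6) (A : 'M[K]_N) :=
  fun g => if g == f then A else U g.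

Definition updd (D : 'I_3 -> 'I_6 -> 'M[K]_N) (x : 'I_3) (f : 'I_6)
  (A : 'M[K]_N) :=
  fun y g => if (y == x) && (g == f) then A else D y g.

Definition dL_dval (L : lagrangian) U D (f : 'I_6) (a b : 'I_N) : K :=
  derive1 (fun t => L (updf U f (U f + t *: delta_mx a b)) D) 0.

Definition dL_dder (L : lagrangian) U D (x : 'I_3) (f : 'I_6) (a b : 'I_N) : K :=
  derive1 (fun t => L U (updd D x f (D x f + t *: delta_mx a b))) 0.

Definition vals (H : fields) (p : pt) : 'I_6 -> 'M[K]_N := fun f => H f p.
Definition ders (H : fields) (p : pt) : 'I_3 -> 'I_6 -> 'M[K]_N :=
  fun x f => mpderiv (H f) x p.

Definition EL_expr (L : lagrangian) (H : fields) (f : 'I_6) (a b : 'I_N)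
  (p : pt) : K :=
  dL_dval L (vals H p) (ders H p) f a b
  - \sum_(x < 3) pderiv (fun q => dL_dder L (vals H q) (ders H q) x f a b) x p.

Definition EL_equations (L : lagrangian) (H : fields) : Prop :=
  forall (f : 'I_6) (a b : 'I_N) (p : pt), EL_expr L H f a b p = 0.

Definition ikl : 'I_6 := inord 0.
Definition ilk : 'I_6 := inord 1.
Definition ilm : 'I_6 := inord 2.
Definition iml : 'I_6 := inord 3.
Definition ikm : 'I_6 := inord 4.
Definition imk : 'I_6 := inord 5.
Definition xk : 'I_3 := inord 0.
Definition xl : 'I_3 := inord 1.
Definition xm : 'I_3 := inord 2.

Definition Lklm (J Jt Jh : 'M[K]_N) (k l m : K) : lagrangian :=
  fun U D =>
  let Hkl := U ikl in let Hlk := U ilk in let Hlm := U ilm in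
  let Hml := U iml in let Hkm := U ikm in let Hmk := U imk in
  2^-1 * \tr (
      Hml *m Jt *m D xk ilm *m Jh - D xk iml *m Jt *m Hlm *m Jh
    + Hkm *m Jh *m D xl imk *m J  - D xl ikm *m Jh *m Hmk *m J
    + Hlk *m J *m D xm ikl *m Jt  - D xm ilk *m J *m Hkl *m Jt)
  + \tr (
      Hml *m Jt *m Hlm *m ((k - m)^-1 *: (J *m Jh))
    - Hml *m ((k - l)^-1 *: (Jt *m J)) *m Hlm *m Jh
    + Hkm *m Jh *m Hmk *m ((l - k)^-1 *: (Jt *m J))
    - Hkm *m ((l - m)^-1 *: (Jh *m Jt)) *m Hmk *m J
    + Hlk *m J *m Hkl *m ((m - l)^-1 *: (Jh *m Jt))
    - Hlk *m ((m - k)^-1 *: (Jh *m J)) *m Hkl *m Jt)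
  + \tr (Hlm *m Jh *m Hmk *m J *m Hkl *m Jt
         - Hml *m Jt *m Hlk *m J *m Hkm *m Jh).

Definition six_equations (J Jt Jh : 'M[K]_N) (k l m : K) (H : fields) : Prop :=
  forall p : pt,
  let Hkl := H ikl p in let Hlk := H ilk p in let Hlm := H ilm p in
  let Hml := H iml p in let Hkm := H ikm p in let Hmk := H imk p in
  (mpderiv (H ilm) xk p =
        ((k - l)^-1 *: J) *m Hlm - Hlm *m ((k - m)^-1 *: J) + Hlk *m J *m Hkm) /\
      (mpderiv (H iml) xk p =
        ((k - m)^-1 *: J) *m Hml - Hml *m ((k - l)^-1 *: J) + Hmk *m J *m Hkl) /\
      (mpderiv (H imk) xl p =
        ((l - m)^-1 *: Jt) *m Hmk - Hmk *m ((l - k)^-1 *: Jt) + Hml *m Jt *m Hlk) /\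
      (mpderiv (H ikm) xl p =
        ((l - k)^-1 *: Jt) *m Hkm - Hkm *m ((l - m)^-1 *: Jt) + Hkl *m Jt *m Hlm) /\
      (mpderiv (H ikl) xm p =
        ((m - k)^-1 *: Jh) *m Hkl - Hkl *m ((m - l)^-1 *: Jh) + Hkm *m Jh *m Hml) /\
      (mpderiv (H ilk) xm p =
        ((m - l)^-1 *: Jh) *m Hlk - Hlk *m ((m - k)^-1 *: Jh) + Hlm *m Jh *m Hmk).

Definition fields_derivable (H : fields) : Prop :=
  forall (f : 'I_6) (i j : 'I_N) (x : 'I_3) (p : pt),
    derivable (fun t => H f (shift p x t) i j) 0 1.

End EulerLagrange.

(* Main.v *)
Require Import Defs.
From HB Require Import structures.
From mathcomp Require Import all_boot all_order all_algebra complex.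
From mathcomp Require Import all_classical all_reals all_analysis.
From mathcomp Require Import ring.
Import numFieldNormedType.Exports.
Import Order.TTheory GRing.Theory Num.Theory.
Local Open Scope ring_scope.

Lemma iklE : ikl = @Ordinal 6 0 isT. Proof. by apply/val_inj; rewrite /= inordK. Qed.
Lemma ilkE : ilk = @Ordinal 6 1 isT. Proof. by apply/val_inj; rewrite /= inordK. Qed.
Lemma ilmE : ilm = @Ordinal 6 2 isT. Proof. by apply/val_inj; rewrite /= inordK. Qed.
Lemma imlE : iml = @Ordinal 6 3 isT. Proof. by apply/val_inj; rewrite /= inordK. Qed.
Lemma ikmE : ikm = @Ordinal 6 4 isT. Proof. by apply/val_inj; rewrite /= inordK. Qed.
Lemma imkE : imk = @Ordinal 6 5 isT. Proof. by apply/val_inj; rewrite /= inordK. Qed.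
Lemma xkE : xk = @Ordinal 3 0 isT. Proof. by apply/val_inj; rewrite /= inordK. Qed.
Lemma xlE : xl = @Ordinal 3 1 isT. Proof. by apply/val_inj; rewrite /= inordK. Qed.
Lemma xmE : xm = @Ordinal 3 2 isT. Proof. by apply/val_inj; rewrite /= inordK. Qed.

Ltac rot_tr A :=
  repeat match goal with
  | |- context [\tr (?X *m ?B)] =>
      lazymatch B with A => fail | _ =>
        lazymatch X with context [A] =>
          rewrite (mxtrace_mulC X B) !mulmxA end end
  | |- context [\tr (A *m ?B)] => rewrite (mxtrace_mulC A B)
  end.

Section A.
Variable K : numFieldType.
Implicit Types (c v : K).

Lemma is_derive_scl c [h : K -> K] [dh : K] :
  is_derive (0:K) 1 h dh -> is_derive (0:K) 1 (fun t => c * h t) (c * dh).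
Proof. move=> H; exact: (is_deriveZ c H). Qed.

Lemma is_derive_scr c [h : K -> K] [dh : K] :
  is_derive (0:K) 1 h dh -> is_derive (0:K) 1 (fun t => h t * c) (dh * c).
Proof.
move=> H; have := is_derive_scl c H.
rewrite mulrC.
have -> : (fun t => c * h t) = (fun t => h t * c) by apply: funext => t; rewrite mulrC.
done.
Qed.

Lemma is_derive_sumf n [h : 'I_n -> K -> K] [dh : 'I_n -> K] :
  (forall i, is_derive (0:K) 1 (h i) (dh i)) ->
  is_derive (0:K) 1 (fun t => \sum_(i < n) h i t) (\sum_(i < n) dh i).
Proof. move=> H; have := is_derive_sum H; by rewrite fct_sumE. Qed.

Lemma derive1_affine c v : derive1 (fun t : K => c + t * v) 0 = v.
Proof.
rewrite derive1E; apply: derive_val.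
have H1 : is_derive (0:K) 1 (fun t : K => t * v) (1 * v).
  by apply: is_derive_scr; exact: is_derive_id.
have := is_deriveD (is_derive_cst c (0:K) 1) H1.
by rewrite add0r mul1r.
Qed.

Lemma is_derive_eqfun (f g : K -> K) d :
  f =1 g -> is_derive (0:K) 1 f d -> is_derive (0:K) 1 g d.
Proof. by move=> /funext ->. Qed.

Lemma pderiv_entry N (F : pt K -> 'M[K]_N) (P Q : 'M[K]_N) (x : 'I_3) (p : pt K) (a b : 'I_N) (c : K) :
  (forall i j, derivable (fun t : K => F (Defs.shift p x t) i j) (0:K) 1) ->
  pderiv (fun q => c * (P *m F q *m Q) b a) x p = c * (P *m mpderiv F x p *m Q) b a.
Proof.
move=> Hd; rewrite /pderiv derive1E; apply: derive_val.
apply: is_derive_scl.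
apply: (@is_derive_eqfun (fun t => \sum_j (\sum_i P b i * F (Defs.shift p x t) i j) * Q j a)).
  by move=> t; rewrite mxE; apply: eq_bigr => j _; rewrite mxE.
rewrite mxE; apply: is_derive_sumf => j.
rewrite mxE; apply: is_derive_scr; apply: is_derive_sumf => i.
apply: is_derive_scl.
rewrite mxE /pderiv derive1E; exact: derivableP.
Qed.

Lemma tr_delta N (M : 'M[K]_N) (a b : 'I_N) : \tr (M *m delta_mx a b) = M b a.
Proof.
rewrite /mxtrace (bigD1 b) //= big1 ?addr0.
  rewrite mxE (bigD1 a) //= big1 ?addr0; first by rewrite mxE !eqxx mulr1.
  by move=> i ia; rewrite mxE (negPf ia) mulr0.
move=> i ib; rewrite mxE big1 // => j _; rewrite mxE (negPf ib) andbF mulr0 //.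
Qed.
End A.

Section S.
Variables (K : numFieldType) (N : nat) (J Jt Jh : 'M[K]_N) (k l m : K).

Lemma trD (X Y : 'M[K]_N) : \tr (X + Y) = \tr X + \tr Y :> K. Proof. exact: mxtraceD. Qed.
Lemma trN (X : 'M[K]_N) : \tr (- X) = - \tr X :> K. Proof. exact: raddfN. Qed.
Lemma trB (X Y : 'M[K]_N) : \tr (X - Y) = \tr X - \tr Y :> K. Proof. by rewrite trD trN. Qed.
Lemma trZ (a : K) (X : 'M[K]_N) : \tr (a *: X) = a * \tr X :> K. Proof. exact: mxtraceZ. Qed.
Lemma tr0 : \tr (0 : 'M[K]_N) = 0 :> K. Proof. exact: mxtrace0. Qed.

Ltac mxnorm :=
  rewrite ?(mulmxDl, mulmxDr, mulmxBl, mulmxBr, mulNmx, mulmxN, opprK,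
            scalerN, scaleNr, scalerA, mul0mx, mulmx0) ?(=^~ scalemxAl, =^~ scalemxAr, scalerA, mulNmx, mulmxN, scalerN) ?mulmxA.
Ltac trnorm := rewrite ?(trD, trB, trN, trZ, tr0).

Definition S1 := (k - m)^-1 *: (J *m Jh).
Definition S2 := (k - l)^-1 *: (Jt *m J).
Definition S3 := (l - k)^-1 *: (Jt *m J).
Definition S4 := (l - m)^-1 *: (Jh *m Jt).
Definition S5 := (m - l)^-1 *: (Jh *m Jt).
Definition S6 := (m - k)^-1 *: (Jh *m J).

Definition V (f : 'I_6) (U : 'I_6 -> 'M[K]_N) (D : 'I_3 -> 'I_6 -> 'M[K]_N) : 'M[K]_N :=
  match nat_of_ord f with
  | 0%N => -(2^-1 *: (Jt *m D xm ilk *m J)) + S5 *m U ilk *m J - Jt *m U ilk *m S6 + Jt *m U ilm *m Jh *m U imk *m J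
  | 1%N => 2^-1 *: (J *m D xm ikl *m Jt) + J *m U ikl *m S5 - S6 *m U ikl *m Jt - J *m U ikm *m Jh *m U iml *m Jt
  | 2%N => -(2^-1 *: (Jh *m D xk iml *m Jt)) + S1 *m U iml *m Jt - Jh *m U iml *m S2 + Jh *m U imk *m J *m U ikl *m Jt
  | 3%N => 2^-1 *: (Jt *m D xk ilm *m Jh) + Jt *m U ilm *m S1 - S2 *m U ilm *m Jh - Jt *m U ilk *m J *m U ikm *m Jh
  | 4%N => 2^-1 *: (Jh *m D xl imk *m J) + Jh *m U imk *m S3 - S4 *m U imk *m J - Jh *m U iml *m Jt *m U ilk *m J
  | _ => -(2^-1 *: (J *m D xl ikm *m Jh)) + S3 *m U ikm *m Jh - J *m U ikm *m S4 + J *m U ikl *m Jt *m U ilm *m Jh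
  end.

Lemma I6cases (f : 'I_6) : f = ikl \/ f = ilk \/ f = ilm \/ f = iml \/ f = ikm \/ f = imk.
Proof.
rewrite iklE ilkE ilmE imlE ikmE imkE.
case: f => [[|[|[|[|[|[|n]]]]]] Hf] //.
- by left; apply: val_inj.
- by right; left; apply: val_inj.
- by do 2 right; left; apply: val_inj.
- by do 3 right; left; apply: val_inj.
- by do 4 right; left; apply: val_inj.
- by do 5 right; apply: val_inj.
Qed.

Lemma val_lemma f U D A :
  Lklm J Jt Jh k l m (updf U f (U f + A)) D =
  Lklm J Jt Jh k l m U D + \tr (V f U D *m A).
Proof.
Proof.
case: (I6cases f) => [->|[->|[->|[->|[->|->]]]]];
rewrite /V /S1 /S2 /S3 /S4 /S5 /S6 /Lklm /updf iklE ilkE ilmE imlE ikmE imkE /=;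
mxnorm; trnorm; rot_tr A; ring.
Qed.

Definition CP (y : 'I_3) (g : 'I_6) : 'M[K]_N :=
  match nat_of_ord y, nat_of_ord g with
  | 0%N, 2%N => Jh | 0%N, 3%N => - Jt | 1%N, 5%N => J | 1%N, 4%N => - Jh | 2%N, 0%N => Jt | 2%N, 1%N => - J
  | _, _ => 0 end.
Definition CG (y : 'I_3) (g : 'I_6) : 'I_6 :=
  match nat_of_ord y, nat_of_ord g with
  | 0%N, 2%N => iml | 0%N, 3%N => ilm | 1%N, 5%N => ikm | 1%N, 4%N => imk | 2%N, 0%N => ilk | 2%N, 1%N => ikl
  | _, _ => ikl end.
Definition CQ (y : 'I_3) (g : 'I_6) : 'M[K]_N :=
  match nat_of_ord y, nat_of_ord g with
  | 0%N, 2%N => Jt | 0%N, 3%N => Jh | 1%N, 5%N => Jh | 1%N, 4%N => J | 2%N, 0%N => J | 2%N, 1%N => Jt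
  | _, _ => 0 end.
Definition CC (U : 'I_6 -> 'M[K]_N) y g := CP y g *m U (CG y g) *m CQ y g.

Lemma sum3 (M : nmodType) (F : 'I_3 -> M) : \sum_(y < 3) F y = F xk + F xl + F xm.
Proof.
rewrite !big_ord_recr big_ord0 /= add0r xkE xlE xmE.
by congr (F _ + F _ + F _); apply: val_inj.
Qed.
Lemma sum6 (F : 'I_6 -> K) :
  \sum_(g < 6) F g = F ikl + F ilk + F ilm + F iml + F ikm + F imk.
Proof.
rewrite !big_ord_recr big_ord0 /= add0r iklE ilkE ilmE imlE ikmE imkE.
by congr (F _ + F _ + F _ + F _ + F _ + F _); apply: val_inj.
Qed.

Ltac rot_D D :=
  repeat match goal with
  | |- context [\tr (?X *m ?B)] =>
      lazymatch B with D _ _ => fail | _ =>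
        lazymatch X with context [D] =>
          rewrite (mxtrace_mulC X B) !mulmxA end end
  end.

Lemma der_decomp U D :
  Lklm J Jt Jh k l m U D = Lklm J Jt Jh k l m U (fun _ _ => 0) +
    2^-1 * \sum_(y < 3) \sum_(g < 6) \tr (CC U y g *m D y g).
Proof.
rewrite sum3 !sum6 /CC /CP /CG /CQ /S1 /S2 /S3 /S4 /S5 /S6 /Lklm
  iklE ilkE ilmE imlE ikmE imkE xkE xlE xmE /=.
mxnorm; trnorm; rot_D D; ring.
Qed.

Lemma der_lemma U D x f A :
  Lklm J Jt Jh k l m U (updd D x f (D x f + A)) =
  Lklm J Jt Jh k l m U D + 2^-1 * \tr (CC U x f *m A).
Proof.
rewrite (der_decomp U (updd _ _ _ _)) (der_decomp U D).
suff -> : \sum_(y < 3) \sum_(g < 6) \tr (CC U y g *m updd D x f (D x f + A) y g) =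
  \sum_(y < 3) \sum_(g < 6) \tr (CC U y g *m D y g) + \tr (CC U x f *m A) by ring.
rewrite (eq_bigr (fun y => \sum_(g < 6) \tr (CC U y g *m D y g) +
    (if y == x then \tr (CC U x f *m A) else 0))); last first.
  move=> y _; rewrite /updd.
  have [->|yx] := eqVneq y x; last first.
    by rewrite addr0; apply: eq_bigr => g _.
  rewrite /= (eq_bigr (fun g => \tr (CC U x g *m D x g) +
    (if g == f then \tr (CC U x f *m A) else 0))); last first.
    move=> g _; have [->|gf] := eqVneq g f; first by rewrite mulmxDr trD.
    by rewrite addr0.
  by rewrite big_split /= -big_mkcond big_pred1_eq.
by rewrite big_split /= -big_mkcond big_pred1_eq.
Qed.

Lemma comm2 (A B : 'M[K]_N) : A *m B = B *m A -> forall M : 'M[K]_N, M *m A *m B = M *m B *m A.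
Proof. by move=> h M; rewrite -!mulmxA h. Qed.

Ltac commnorm cJh cJt cJtJh :=
  rewrite ?(comm2 _ _ cJh, comm2 _ _ cJt, comm2 _ _ cJtJh, cJh, cJt, cJtJh).

Definition Emx f (H : fields K N) p :=
  V f (vals H p) (ders H p) -
  2^-1 *: \sum_(x < 3) (CP x f *m mpderiv (H (CG x f)) x p *m CQ x f).

Hypotheses (Hkl : k != l) (Hlm : l != m) (Hkm : k != m)
  (cJh : J *m Jh = Jh *m J) (cJt : J *m Jt = Jt *m J) (cJtJh : Jt *m Jh = Jh *m Jt).

Ltac nz := rewrite ?subr_eq0 ?[l == k]eq_sym ?[m == l]eq_sym ?[m == k]eq_sym ?Hkl ?Hlm ?Hkm.

Ltac emx_tac :=
  rewrite /Emx sum3 /V /CP /CG /CQ /vals /ders /S1 /S2 /S3 /S4 /S5 /S6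
    iklE ilkE ilmE imlE ikmE imkE xkE xlE xmE /=;
  mxnorm; rewrite ?addr0;
  let cJh' := fresh in let cJt' := fresh in let cJtJh' := fresh in
  have cJh' := esym cJh; have cJt' := esym cJt; have cJtJh' := esym cJtJh;
  commnorm cJh' cJt' cJtJh';
  apply/matrixP => i j; rewrite !mxE;
  field; nz; done.

Lemma Emx_ikl (H : fields K N) p : Emx ikl H p = Jt *m (((m - l)^-1 *: Jh) *m H ilk p - H ilk p *m ((m - k)^-1 *: Jh) + H ilm p *m Jh *m H imk p - mpderiv (H ilk) xm p) *m J.
Proof. emx_tac. Qed.

Lemma Emx_ilk (H : fields K N) p : Emx ilk H p = - (J *m (((m - k)^-1 *: Jh) *m H ikl p - H ikl p *m ((m - l)^-1 *: Jh) + H ikm p *m Jh *m H iml p - mpderiv (H ikl) xm p) *m Jt).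
Proof. emx_tac. Qed.

Lemma Emx_ilm (H : fields K N) p : Emx ilm H p = Jh *m (((k - m)^-1 *: J) *m H iml p - H iml p *m ((k - l)^-1 *: J) + H imk p *m J *m H ikl p - mpderiv (H iml) xk p) *m Jt.
Proof. emx_tac. Qed.

Lemma Emx_iml (H : fields K N) p : Emx iml H p = - (Jt *m (((k - l)^-1 *: J) *m H ilm p - H ilm p *m ((k - m)^-1 *: J) + H ilk p *m J *m H ikm p - mpderiv (H ilm) xk p) *m Jh).
Proof. emx_tac. Qed.

Lemma Emx_ikm (H : fields K N) p : Emx ikm H p = - (Jh *m (((l - m)^-1 *: Jt) *m H imk p - H imk p *m ((l - k)^-1 *: Jt) + H iml p *m Jt *m H ilk p - mpderiv (H imk) xl p) *m J).
Proof. emx_tac. Qed.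

Lemma Emx_imk (H : fields K N) p : Emx imk H p = J *m (((l - k)^-1 *: Jt) *m H ikm p - H ikm p *m ((l - m)^-1 *: Jt) + H ikl p *m Jt *m H ilm p - mpderiv (H ikm) xl p) *m Jh.
Proof. emx_tac. Qed.


Lemma dval_eq U D f a b :
  dL_dval (Lklm J Jt Jh k l m) U D f a b = V f U D b a.
Proof.
rewrite /dL_dval.
have E : (fun t : K => Lklm J Jt Jh k l m (updf U f (U f + t *: delta_mx a b)) D) =
         (fun t => Lklm J Jt Jh k l m U D + t * V f U D b a).
  by apply: funext => t; rewrite val_lemma -scalemxAr trZ tr_delta.
by rewrite E derive1_affine.
Qed.

Lemma dder_eq U D x f a b :
  dL_dder (Lklm J Jt Jh k l m) U D x f a b = 2^-1 * CC U x f b a.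
Proof.
rewrite /dL_dder.
have E : (fun t : K => Lklm J Jt Jh k l m U (updd D x f (D x f + t *: delta_mx a b))) =
         (fun t => Lklm J Jt Jh k l m U D + t * (2^-1 * CC U x f b a)).
  by apply: funext => t; rewrite der_lemma -scalemxAr trZ tr_delta mulrCA.
by rewrite E derive1_affine.
Qed.

Lemma entry_lem (X : 'M[K]_N) (c : K) (S : 'I_3 -> 'M[K]_N) i j :
  (X - c *: \sum_(x < 3) S x) i j = X i j - \sum_(x < 3) c * S x i j.
Proof. by rewrite !mxE summxE mulr_sumr. Qed.

Lemma EL_Emx (H : fields K N) (Hd : fields_derivable H) f a b p :
  EL_expr (Lklm J Jt Jh k l m) H f a b p = Emx f H p b a.
Proof.
rewrite /EL_expr dval_eq.
rewrite (eq_bigr (fun x => 2^-1 * (CP x f *m mpderiv (H (CG x f)) x p *m CQ x f) b a)); last first.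
  move=> x _.
  rewrite (_ : (fun q => dL_dder _ (vals H q) (ders H q) x f a b) =
      (fun q => 2^-1 * (CP x f *m H (CG x f) q *m CQ x f) b a)); last first.
    by apply: funext => q; rewrite dder_eq.
  by apply: pderiv_entry => i j; exact: Hd.
by rewrite /Emx entry_lem.
Qed.

Lemma z_iff {P Q R : 'M[K]_N} : P \in unitmx -> Q \in unitmx -> (P *m R *m Q = 0 <-> R = 0).
Proof.
move=> uP uQ; split=> [h|->]; last by rewrite mulmx0 mul0mx.
by rewrite -(mulKmx uP R) -[P *m R](mulmxK uQ) h mul0mx mulmx0.
Qed.

Lemma z_iffN {P Q R : 'M[K]_N} : P \in unitmx -> Q \in unitmx -> (- (P *m R *m Q) = 0 <-> R = 0).
Proof.
move=> uP uQ; rewrite -(z_iff (R:=R) uP uQ); split=> h; last by rewrite h oppr0.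
by rewrite -[P *m R *m Q]opprK h oppr0.
Qed.

Lemma res_iff (A X : 'M[K]_N) : A - X = 0 <-> X = A.
Proof.
split=> [/eqP|->]; last by rewrite subrr.
by rewrite subr_eq0 => /eqP ->.
Qed.

Lemma main_gen (H : fields K N) :
  J \in unitmx -> Jt \in unitmx -> Jh \in unitmx ->
  fields_derivable H ->
  (EL_equations (Lklm J Jt Jh k l m) H <-> six_equations J Jt Jh k l m H).
Proof.
move=> uJ uJt uJh Hd.
have key : EL_equations (Lklm J Jt Jh k l m) H <-> forall f p, Emx f H p = 0.
  split=> [EL f p | E f a b p].
    by apply/matrixP => i j; rewrite -EL_Emx // EL mxE.
  by rewrite EL_Emx // E mxE.
rewrite key; split.
- move=> E p; cbv zeta.
  have e1 := E iml p; rewrite Emx_iml in e1; move/(z_iffN uJt uJh)/res_iff: e1 => e1.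
  have e2 := E ilm p; rewrite Emx_ilm in e2; move/(z_iff uJh uJt)/res_iff: e2 => e2.
  have e3 := E ikm p; rewrite Emx_ikm in e3; move/(z_iffN uJh uJ)/res_iff: e3 => e3.
  have e4 := E imk p; rewrite Emx_imk in e4; move/(z_iff uJ uJh)/res_iff: e4 => e4.
  have e5 := E ilk p; rewrite Emx_ilk in e5; move/(z_iffN uJ uJt)/res_iff: e5 => e5.
  have e6 := E ikl p; rewrite Emx_ikl in e6; move/(z_iff uJt uJ)/res_iff: e6 => e6.
  by do !split.
- move=> S f p; have := S p; cbv zeta; case=> e1 [e2 [e3 [e4 [e5 e6]]]].
  case: (I6cases f) => [->|[->|[->|[->|[->|->]]]]].
  + by rewrite Emx_ikl; apply/(z_iff uJt uJ)/res_iff.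
  + by rewrite Emx_ilk; apply/(z_iffN uJ uJt)/res_iff.
  + by rewrite Emx_ilm; apply/(z_iff uJh uJt)/res_iff.
  + by rewrite Emx_iml; apply/(z_iffN uJt uJh)/res_iff.
  + by rewrite Emx_ikm; apply/(z_iffN uJh uJ)/res_iff.
  + by rewrite Emx_imk; apply/(z_iff uJ uJh)/res_iff.
Qed.
End S.

Theorem mainTheorem12 (R : realType) (N : nat) (k l m : R[i])
  (J Jt Jh : 'M[R[i]]_N) (H : fields R[i] N) :
  k != l -> l != m -> k != m ->
  J *m Jt = Jt *m J -> J *m Jh = Jh *m J -> Jt *m Jh = Jh *m Jt ->
  J \in unitmx -> Jt \in unitmx -> Jh \in unitmx ->
  fields_derivable H ->
  (EL_equations (Lklm J Jt Jh k l m) H <-> six_equations J Jt Jh k l m H).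
Proof.
move=> Hkl Hlm Hkm cJt cJh cJtJh uJ uJt uJh Hd.
exact: main_gen.
Qed.
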